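(* Let $F$ and $G$ be simple graphs. Then \[\hom(F,G^\circ)=\sum_{L\subseteq E(F)}\hom(F\oslash L,G).\]
   Context: Graphs are finite, undirected, without multiple edges, possibly with loops; simple means without loops. A homomorphism $F\to G$ is a vertex map sending edges to edges and looped vertices to looped vertices (so an edge may be mapped onto a loop); $\hom(F,G)$ counts them. $G^\circ$ is obtained from $G$ by adding a loop at every vertex. For a simple graph $F$ and $L\subseteq E(F)$, $v\sim_L w$ iff $v,w$ lie in the same connected component of the graph $(V(F),L)$; $[v]_L$ denotes the class of $v$. The contraction quotient $F\oslash L$ is the graph (possibly with loops) whose vertices are the classes $[v]_L$, with an edge (or loop, if the classes coincide) between $[v]_L$ and $[w]_L$ iff there is an edge $xy\in E(F)\setminus L$ with $x\sim_L v$ and $y\sim_L w$. *)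

(* Defs.v *)
From mathcomp Require Import all_boot.
Set Implicit Arguments. Unset Strict Implicit. Unset Printing Implicit Defensive.

(* A finite graph, possibly with loops: a vertex finType and an adjacency
   relation; a loop at x is [adj x x]. *)
Record graph := Graph { vert : finType; adj : rel vert }.
Arguments adj : clear implicits.

Definition simple (G : graph) : Prop :=
  symmetric (adj G) /\ irreflexive (adj G).

Definition is_hom (F G : graph) (f : vert F -> vert G) : bool :=
  [forall x, forall y, adj F x y ==> adj G (f x) (f y)].

Definition hom (F G : graph) : nat :=
  #|[set f : {ffun vert F -> vert G} | @is_hom F G f]|.

Definition loopify (G : graph) : graph :=
  @Graph (vert G) (fun x y => (x == y) || adj G x y).

Definition edges (F : graph) : {set {set vert F}} :=
  [set S : {set vert F} | [exists x, exists y, adj F x y && (S == [set x; y])]].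

Section Contraction.
Variables (F : graph) (L : {set {set vert F}}).

Definition Lrel : rel (vert F) := fun x y => [set x; y] \in L.

Definition Lclass (v : vert F) : {set vert F} := [set w | connect Lrel v w].

Definition Lclasses : {set {set vert F}} := [set Lclass v | v : vert F].

Definition cvert : finType := {C : {set vert F} | C \in Lclasses}.

Definition cadj : rel cvert := fun C D =>
  [exists x, exists y,
     [&& x \in val C, y \in val D, adj F x y & [set x; y] \notin L]].

Definition contract : graph := @Graph cvert cadj.
End Contraction.

(* Main.v *)
Require Import Defs.
From mathcomp Require Import all_boot.

Section Proof.
Variables (F G : graph) (hF : simple F) (hG : simple G).

Lemma Lrel_sym (L : {set {set vert F}}) : symmetric (Lrel L).
Proof. by move=> x y; rewrite /Lrel setUC. Qed.

Lemma Lconnect_sym (L : {set {set vert F}}) : connect_sym (Lrel L).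
Proof. exact: sym_connect_sym (Lrel_sym L). Qed.

Lemma Lclass_eq {L : {set {set vert F}}} {x y} :
  connect (Lrel L) x y -> Lclass L x = Lclass L y.
Proof.
by move=> c; apply/setP => z; rewrite !inE (same_connect (Lconnect_sym L) c).
Qed.

Lemma Lclass_in (L : {set {set vert F}}) (x : vert F) : Lclass L x \in Lclasses L.
Proof. by apply/imsetP; exists x. Qed.

Definition cls (L : {set {set vert F}}) (x : vert F) : cvert L :=
  exist _ (Lclass L x) (Lclass_in L x).

Lemma cls_eq {L : {set {set vert F}}} {x y} :
  connect (Lrel L) x y -> cls L x = cls L y.
Proof. by move=> c; apply: val_inj; rewrite /= (Lclass_eq c). Qed.

Lemma cls_mem {L : {set {set vert F}}} (C : cvert L) x :
  x \in val C -> C = cls L x.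
Proof.
move=> xin; apply: val_inj; case: C xin => C CP /= xin.
have /imsetP [v _ Cv] := CP.
rewrite Cv; apply: Lclass_eq; move: xin; rewrite Cv inE.
by rewrite (Lconnect_sym L).
Qed.

Lemma cls_surj {L : {set {set vert F}}} (C : cvert L) : exists x, C = cls L x.
Proof.
case: C => C CP; have /imsetP [v _ Cv] := CP; exists v.
by apply: val_inj.
Qed.

Definition Lf (f : {ffun vert F -> vert G}) : {set {set vert F}} :=
  [set S | (S \in edges F) && [forall x in S, forall y in S, f x == f y]].

Lemma forall2 (f : {ffun vert F -> vert G}) x y :
  [forall u in [set x; y], forall v in [set x; y], f u == f v] = (f x == f y).
Proof.
apply/idP/idP.
  by move/forallP/(_ x); rewrite set21 /= => /forallP/(_ y); rewrite set22.
move/eqP=> e; apply/forallP => u; apply/implyP; rewrite !inE => /orP[] /eqP ->;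
  apply/forallP => v; apply/implyP; rewrite !inE => /orP[] /eqP -> //; by rewrite e.
Qed.

Lemma edgesP S : reflect (exists x y, adj F x y /\ S = [set x; y]) (S \in edges F).
Proof.
rewrite inE; apply: (iffP existsP) => [[x /existsP [y /andP [a /eqP e]]]|[x [y [a e]]]].
  by exists x, y.
by exists x; apply/existsP; exists y; rewrite a e eqxx.
Qed.

Definition phi (L : {set {set vert F}}) (g : {ffun cvert L -> vert G}) :
  {ffun vert F -> vert G} := [ffun x => g (cls L x)].

Lemma phi_inj L : injective (@phi L).
Proof.
move=> g1 g2 e; apply/ffunP => C; have [x ->] := cls_surj (L:=L) C.
by have := congr1 (fun h : {ffun vert F -> vert G} => h x) e; rewrite /phi !ffunE.
Qed.

Lemma homP (A B : graph) (f : vert A -> vert B) :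
  reflect (forall x y, adj A x y -> adj B (f x) (f y)) (is_hom f).
Proof.
apply: (iffP forallP) => [H x y|H x]; first by move/forallP: (H x) => /(_ y)/implyP.
by apply/forallP => y; apply/implyP/H.
Qed.

Lemma const_connect {L : {set {set vert F}}} {f : vert F -> vert G} :
  (forall x y, [set x; y] \in L -> f x = f y) ->
  forall x y, connect (Lrel L) x y -> f x = f y.
Proof.
move=> H x y /connectP [p pp ->]; elim: p x pp => [|z p IH] x //= /andP [r pp].
by rewrite (H _ _ r); apply: IH.
Qed.

Lemma key (L : {set {set vert F}}) (hL : L \subset edges F) :
  [set f : {ffun vert F -> vert G} | is_hom (G := loopify G) f & Lf f == L] =
  phi L @: [set g : {ffun cvert L -> vert G} | is_hom (F := contract L) g].
Proof.
have [symF irrF] := hF; have [symG irrG] := hG.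
apply/setP => f; rewrite inE; apply/andP/imsetP.
- move=> [/homP hf /eqP eL].
  have Hc : forall x y, [set x; y] \in L -> f x = f y.
    move=> x y xyL; move: (xyL); rewrite -{1}eL inE => /andP [_].
    by rewrite forall2 => /eqP.
  have Hc2 := const_connect (L:=L) Hc.
  have cs : forall C : cvert L, exists x, C == cls L x.
    by move=> C; have [x e] := cls_surj C; exists x; rewrite e.
  pose g := [ffun C : cvert L => f (xchoose (cs C))].
  have gE : forall x, g (cls L x) = f x.
    move=> x; rewrite ffunE /=; symmetry; apply: Hc2.
    have := xchooseP (cs (cls L x)); set z := xchoose _ => /eqP /(congr1 val) /= e.
    have : z \in Lclass L z by rewrite inE connect0.
    by rewrite -e inE.
  exists g.
    rewrite inE; apply/homP => C D /existsP [x /existsP [y /and4P [xC yD a nL]]].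
    rewrite (cls_mem _ _ xC) (cls_mem _ _ yD). move: (gE x) (gE y) => /= -> ->.
    have := hf x y a; rewrite /= => /orP [/eqP fe|//].
    exfalso; move/negP: nL; apply; rewrite -eL inE forall2 fe eqxx andbT.
    by apply/edgesP; exists x, y.
  by apply/ffunP => x; rewrite /phi ffunE gE.
- move=> [g]; rewrite inE => /homP hg ->; split.
    apply/homP => x y a /=; rewrite /phi !ffunE.
    case xyL: ([set x; y] \in L).
      by rewrite (@cls_eq L x y) ?eqxx //; apply: connect1.
    apply/orP; right; apply: hg; apply/existsP; exists x; apply/existsP; exists y.
    by rewrite !inE !connect0 a xyL.
  apply/eqP/setP => S; rewrite inE.
  apply/idP/idP.
    move=> /andP [/edgesP [x [y [a ->]]]]; rewrite forall2 /phi !ffunE.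
    apply: contraTT => xyL; apply/eqP => e.
    suff: cadj (cls L x) (cls L y) by move/hg; rewrite e irrG.
    apply/existsP; exists x; apply/existsP; exists y.
    by rewrite !inE !connect0 a xyL.
  move=> SL; rewrite (subsetP hL _ SL) /=.
  have /edgesP [x [y [a Se]]] := subsetP hL _ SL.
  move: SL; rewrite Se forall2 /phi !ffunE => SL.
  by rewrite (@cls_eq L x y) //; apply: connect1.
Qed.
End Proof.

Theorem theorem10 (F G : graph) (hF : simple F) (hG : simple G) :
  hom F (loopify G) = \sum_(L : {set {set vert F}} | L \subset edges F) hom (contract L) G.
Proof.
rewrite /hom -sum1_card (partition_big (@Lf F G) (fun L => L \subset edges F)).
  apply: eq_bigr => L hL; rewrite sum1_card.
  rewrite -(card_imset _ (@phi_inj F G L)) -(@key F G hF hG L hL).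
  by apply: eq_card => f; rewrite [in LHS]unfold_in /= !inE.
by move=> f _; apply/subsetP => S; rewrite inE => /andP [].
Qed.
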